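(* Let $\mathcal{A}=(u,A,v)$ be a pre-standard admissible linear system of dimension $n\ge 2$, with system matrix $A=(a_{ij})$, whose left family $s=A^{-1}v$ is $\mathbb{K}$-linearly dependent. Let $m\in\{2,3,\ldots,n\}$ be the minimal index such that the left subfamily $(s_m,s_{m+1},\ldots,s_n)$ is $\mathbb{K}$-linearly independent. Then there exist matrices $T,U\in\mathbb{K}^{1\times(n+1-m)}$ such that $$U+(a_{m-1,j})_{j=m}^{n}-T\,(a_{ij})_{i,j=m}^{n}=\begin{bmatrix}0&\cdots&0\end{bmatrix}\quad\text{and}\quad T\,(v_i)_{i=m}^{n}=0,$$ where the first equation holds as an identity of row vectors over $\mathbb{K}\langle X\rangle$.
   Context: $\mathbb{K}$ is a commutative field, $X=\{x_1,\ldots,x_d\}$ a finite alphabet, $\mathbb{K}\langle X\rangle$ the free associative algebra and $\mathbb{K}(\!\langle X\rangle\!)$ its free field (universal field of fractions). A linear representation of $f\in\mathbb{K}(\!\langle X\rangle\!)$ is a triple $(u,A,v)$ with $u\in\mathbb{K}^{1\times n}$, $v\in\mathbb{K}^{n\times 1}$ and full (i.e. invertible over the free field) $A=A_0\otimes 1+\sum_{\ell=1}^d A_\ell\otimes x_\ell$, $A_\ell\in\mathbb{K}^{n\times n}$, with $f=uA^{-1}v$; $n$ is its dimension. It is an admissible linear system (ALS) if $u=e_1=[1,0,\ldots,0]$. The left family is $s=A^{-1}v$ (entries $s_i$). An ALS $(u,A,v)$ of dimension $n$ for a nonzero polynomial $p\in\mathbb{K}\langle X\rangle$ is pre-standard if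 $v=[0,\ldots,0,\lambda]^\top$ for some $\lambda\in\mathbb{K}$ and $A=(a_{ij})$ is upper triangular with $a_{ii}=1$ for all $i$. *)

(* Defs.v *)
From HB Require Import structures.
From mathcomp Require Import all_boot all_order all_algebra.
From mathcomp.multinomials Require Import monalg.

Set Implicit Arguments.
Unset Strict Implicit.
Unset Printing Implicit Defensive.

Import GRing.Theory.
Local Open Scope ring_scope.

(* The free associative algebra K<X> on the alphabet X = {x_1,...,x_d},
   realised as the monoid algebra of the free monoid on 'I_d. *)
Definition freeAlg (K : fieldType) (d : nat) := {malg K[{fmonom 'I_d}]}.

(* The letter x_l (l : 'I_d, 0-based) as an element of K<X>. *)
Definition letter (K : fieldType) (d : nat) (l : 'I_d) : freeAlg K d :=
  << fmu l >>.

Definition scal (K : fieldType) (d : nat) (c : K) : freeAlg K d := c%:MP.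

Definition sysmx (K : fieldType) (d n : nat) (A0 : 'M[K]_n)
    (Al : 'I_d -> 'M[K]_n) : 'M[freeAlg K d]_n :=
  \matrix_(i, j) (scal d (A0 i j) + \sum_(l < d) scal d (Al l i j) * letter K l).

(* 1-based access to entries of vectors / matrices by natural-number indices
   (value 0 out of range; only used in range). *)
Definition ent (R : nmodType) (n p : nat) (M : 'M[R]_(n, p)) (i j : nat) : R :=
  match (insub i.-1 : option 'I_n), (insub j.-1 : option 'I_p) with
  | Some i', Some j' => M i' j'
  | _, _ => 0
  end.

Definition cent (R : nmodType) (n : nat) (v : 'cV[R]_n) (i : nat) : R :=
  ent v i 1.

Definition lin_indep (K : fieldType) (V : lmodType K) (k : nat)
    (f : 'I_k -> V) : Prop :=
  forall c : 'I_k -> K, \sum_(j < k) c j *: f j = 0 -> forall j, c j = 0.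

Definition pre_standard (K : fieldType) (d n : nat) (u : 'rV[K]_n)
    (A0 : 'M[K]_n) (Al : 'I_d -> 'M[K]_n) (v : 'cV[K]_n) : Prop :=
  [/\ forall j : 'I_n, u 0 j = (if val j == 0%N then 1 else 0),
      forall i : 'I_n, (i.+1 < n)%N -> v i 0 = 0,
      forall i j : 'I_n, (j < i)%N -> sysmx A0 Al i j = 0
    & forall i : 'I_n, sysmx A0 Al i i = 1].

(* Main.v *)
Require Import Defs.
From HB Require Import structures.
From mathcomp Require Import all_boot all_order all_algebra.
From mathcomp.multinomials Require Import monalg.
From mathcomp Require Import finmap.
From mathcomp Require Import zify.
From Stdlib Require Import Classical.
Import GRing.Theory.
Local Open Scope ring_scope.

Section Aux.
Variables (K : fieldType) (d : nat).
Local Notation FA := (freeAlg K d).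

Lemma fmu_mul_eq (l l' : 'I_d) (a b : {fmonom 'I_d}) :
  (mmul (fmu l) a == mmul (fmu l') b) = (l == l') && (a == b).
Proof. by rewrite !fmP !fmM !fmU /= eqseq_cons -fmP. Qed.

Lemma fmu_mul_neq1 (l : 'I_d) (a : {fmonom 'I_d}) :
  (mmul (fmu l) a == mone) = false.
Proof. by rewrite fmM_eq1 fm1_eq1. Qed.

Lemma coef_letterM (l l' : 'I_d) (w : {fmonom 'I_d}) (g : FA) :
  (letter K l * g)@_(mmul (fmu l') w) = if l == l' then g@_w else 0.
Proof.
rewrite /letter mcoeffMr.
under eq_bigr do rewrite msuppU1 big_seq_fset1 mcoeffU1 eqxx mul1r fmu_mul_eq.
case: eqP => [_|_]; last by rewrite big1 // => i _; rewrite andFb mulr0n.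
case: (msuppP g w) => [wg|wg].
  rewrite (bigD1_seq w) //= ?eqxx ?mulr1n; last exact: fset_uniq.
  by rewrite big1 ?addr0 // => i /negbTE ->; rewrite mulr0n.
by rewrite big1_seq // => i /andP[_ ig]; case: eqP ig wg => [->->|]; rewrite ?mulr0n.
Qed.

Lemma coef_letterM1 (l : 'I_d) (g : FA) : (letter K l * g)@_mone = 0.
Proof.
rewrite /letter mcoeffMr.
under eq_bigr do rewrite msuppU1 big_seq_fset1 mcoeffU1 eqxx mul1r fmu_mul_neq1.
by rewrite big1 // => i _; rewrite mulr0n.
Qed.

Lemma coef_scal1 (c : K) : (scal d c)@_mone = c.
Proof. by rewrite /scal mcoeffC eqxx mulr1n. Qed.

Lemma coef_scalM (c : K) (l : 'I_d) w : (scal d c)@_(mmul (fmu l) w) = 0.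
Proof. by rewrite /scal mcoeffC fmu_mul_neq1 mulr0n. Qed.

Lemma eps_sysent (c : K) (cl : 'I_d -> K) :
  (scal d c + \sum_(l < d) scal d (cl l) * letter K l)@_mone = c.
Proof.
rewrite mcoeffD coef_scal1 raddf_sum /= big1 ?addr0 // => l _.
by rewrite /scal mcoeffCM /letter mcoeffU1 fm1_eq1 mulr0.
Qed.

End Aux.
Lemma mcoeff_sum (K : fieldType) (d n : nat) (F : 'I_n -> freeAlg K d) w :
  (\sum_(i < n) F i)@_w = \sum_(i < n) (F i)@_w.
Proof. by rewrite raddf_sum. Qed.

Section Core.
Variables (K : fieldType) (d k : nat) (f : 'I_k -> freeAlg K d).

Fact NF_key : unit. Proof. by []. Qed.
Definition NF : ('I_k -> K) -> ('I_d -> 'I_k -> K) -> freeAlg K d :=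
  locked_with NF_key (fun r0 rl =>
  \sum_j r0 j *: f j + \sum_l \sum_j rl l j *: (letter K l * f j)).
Lemma NFE r0 rl : NF r0 rl =
  \sum_j r0 j *: f j + \sum_l \sum_j rl l j *: (letter K l * f j).
Proof. by rewrite [NF]unlock. Qed.

Lemma rowpolyE (r0 : 'I_k -> K) (rl : 'I_d -> 'I_k -> K) :
  \sum_j (scal d (r0 j) + \sum_l scal d (rl l j) * letter K l) * f j = NF r0 rl.
Proof.
rewrite !NFE; under eq_bigr do rewrite mulrDl /scal mul_malgC big_distrl /=.
rewrite big_split /=; congr (_ + _).
rewrite exchange_big /=; apply: eq_bigr => l _; apply: eq_bigr => j _.
by rewrite mul_malgC scalerAl.
Qed.
Arguments rowpolyE : clear implicits.

Lemma NF_comb (T : 'I_k -> K) (B0 : 'I_k -> 'I_k -> K) (Bl : 'I_d -> 'I_k -> 'I_k -> K) :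
  \sum_i T i *: NF (B0 i) (fun l => Bl l i)
  = NF (fun j => \sum_i T i * B0 i j) (fun l j => \sum_i T i * Bl l i j).
Proof.
rewrite NFE; under eq_bigr do rewrite NFE scalerDr !scaler_sumr.
rewrite big_split /=; congr (_ + _).
  rewrite exchange_big /=; apply: eq_bigr => j _; rewrite scaler_suml.
  by apply: eq_bigr => i _; rewrite scalerA.
rewrite exchange_big /=; apply: eq_bigr => l _.
under eq_bigr do rewrite scaler_sumr.
rewrite exchange_big /=; apply: eq_bigr => j _; rewrite scaler_suml.
by apply: eq_bigr => i _; rewrite scalerA.
Qed.

Lemma coefNF_x r0 rl (l : 'I_d) w :
  (NF r0 rl)@_(mmul (fmu l) w) =
  \sum_j r0 j * (f j)@_(mmul (fmu l) w) + \sum_j rl l j * (f j)@_w.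
Proof.
rewrite !NFE mcoeffD !mcoeff_sum /=; congr (_ + _).
  by apply: eq_bigr => j _; rewrite mcoeffZ.
rewrite (bigD1 l) //= [X in _ + X]big1 ?addr0.
  by rewrite mcoeff_sum; apply: eq_bigr => j _; rewrite mcoeffZ coef_letterM eqxx.
move=> l' nl; rewrite mcoeff_sum big1 // => j _.
by rewrite mcoeffZ coef_letterM (negbTE nl) mulr0.
Qed.

Lemma coefNF_1 r0 rl : (NF r0 rl)@_mone = \sum_j r0 j * (f j)@_mone.
Proof.
rewrite !NFE mcoeffD !mcoeff_sum /= [X in _ + X]big1 ?addr0.
  by apply: eq_bigr => j _; rewrite mcoeffZ.
move=> l _; rewrite mcoeff_sum big1 // => j _.
by rewrite mcoeffZ coef_letterM1 mulr0.
Qed.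

Lemma core (B0 : 'M[K]_k) (Bl : 'I_d -> 'M[K]_k) (g : 'rV[K]_k)
    (al : 'I_d -> 'rV[K]_k) (w : 'cV[K]_k) :
  lin_indep f -> B0 \in unitmx ->
  \sum_j (scal d (g 0 j) + \sum_l scal d (al l 0 j) * letter K l) * f j = 0 ->
  (forall i, \sum_j (scal d (B0 i j) + \sum_l scal d (Bl l i j) * letter K l) * f j
     = scal d (w i 0)) ->
  (forall l, (g *m invmx B0) *m Bl l = al l) /\ (g *m invmx B0) *m w = 0.
Proof.
move=> hind hB0 H1 H2.
set T := g *m invmx B0.
have hTB : T *m B0 = g by rewrite /T mulmxKV.
rewrite rowpolyE in H1.
have E : NF (fun j => g 0 j) (fun l j => al l 0 j)
  - \sum_i T 0 i *: NF (B0 i) (fun l => Bl l i) = - \sum_i T 0 i *: scal d (w i 0).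
  rewrite H1 sub0r; congr (- _); apply: eq_bigr => i _; by rewrite -H2 rowpolyE.
rewrite NF_comb in E.
have hg : forall j, \sum_i T 0 i * B0 i j = g 0 j.
  by move=> j; rewrite -hTB mxE.
split.
  move=> l; apply/rowP => j.
  pose c := fun j => al l 0 j - \sum_i T 0 i * Bl l i j.
  have hc : \sum_j c j *: f j = 0.
    apply/malgP => w'; rewrite mcoeff0 mcoeff_sum /=.
    have := congr1 (mcoeff (mmul (fmu l) w')) E.
    rewrite mcoeffB !coefNF_x.
    under [X in _ - (X + _) = _]eq_bigr do rewrite hg.
    have Z : (\sum_i T 0 i *: scal d (w i 0))@_(mmul (fmu l) w') = 0.
      by rewrite mcoeff_sum big1 // => i _; rewrite mcoeffZ coef_scalM mulr0.
    rewrite opprD addrACA subrr add0r mcoeffN Z oppr0 -sumrB => H.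
    apply: etrans H; apply: eq_bigr => j' _.
    by rewrite mcoeffZ /c mulrBl.
  have := hind c hc j; rewrite /c => /eqP; rewrite subr_eq0 => /eqP ->.
  by rewrite mxE; apply: eq_bigr => i _; rewrite !mxE.
apply/colP => i; rewrite ord1 !mxE.
have := congr1 (mcoeff mone) E.
rewrite mcoeffB !coefNF_1.
under [X in _ - X = _]eq_bigr do rewrite hg.
rewrite subrr mcoeffN mcoeff_sum /= => /eqP; rewrite eq_sym oppr_eq0 => /eqP H.
apply: etrans H; by apply: eq_bigr => j _; rewrite mcoeffZ coef_scal1.
Qed.

End Core.

Lemma entE (R : nmodType) n p (M : 'M[R]_(n,p)) (i : 'I_n) (j : 'I_p) a b :
  a = i.+1 -> b = j.+1 -> ent M a b = M i j.
Proof. by move=> -> ->; rewrite /ent /= !valK. Qed.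

Lemma lin_indep_cast (K : fieldType) (V : lmodType K) N N' (e : N = N') (F : nat -> V) :
  lin_indep (fun j : 'I_N => F (val j)) -> lin_indep (fun j : 'I_N' => F (val j)).
Proof. by case: N' / e. Qed.

Lemma sysmxE (K : fieldType) d n (A0 : 'M[K]_n) Al i j :
  sysmx A0 Al i j = scal d (A0 i j) + \sum_(l < d) scal d (Al l i j) * letter K l.
Proof. by rewrite mxE. Qed.

Lemma combE (K : fieldType) d k (T : 'I_k -> K) (b0 : 'I_k -> K) (bl : 'I_d -> 'I_k -> K) :
  \sum_i scal d (T i) * (scal d (b0 i) + \sum_l scal d (bl l i) * letter K l) =
  scal d (\sum_i T i * b0 i) + \sum_l scal d (\sum_i T i * bl l i) * letter K l.
Proof.
under eq_bigr do rewrite mulrDr big_distrr /=.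
rewrite big_split /= /scal rmorph_sum; congr (_ + _).
  by apply: eq_bigr => i _; rewrite rmorphM.
rewrite exchange_big /=; apply: eq_bigr => l _.
rewrite rmorph_sum big_distrl /=; apply: eq_bigr => i _.
by rewrite mulrA rmorphM.
Qed.


Lemma lin_indep_ext (K : fieldType) (V : lmodType K) N (F G : 'I_N -> V) :
  (forall j, F j = G j) -> lin_indep F -> lin_indep G.
Proof.
move=> e h c hc; apply: h; apply: etrans hc; apply: eq_bigr => j _; by rewrite e.
Qed.

Lemma scal0 (K : fieldType) d : scal d (0 : K) = 0.
Proof. by rewrite /scal raddf0. Qed.

Lemma addnR (a b : nat) : (a + b)%R = (a + b)%N.
Proof. by []. Qed.

Theorem lemma2p5 (K : fieldType) (d n : nat) (u : 'rV[K]_n) (A0 : 'M[K]_n)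
    (Al : 'I_d -> 'M[K]_n) (v : 'cV[K]_n) (s : 'cV[freeAlg K d]_n) (m : nat) :
  (2 <= n)%N ->
  pre_standard u A0 Al v ->
  sysmx A0 Al *m s = map_mx (scal d) v ->
  cent s 1 != 0 ->
  ~ lin_indep (fun i : 'I_n => s i 0) ->
  (2 <= m <= n)%N ->
  lin_indep (fun j : 'I_(n.+1 - m) => cent s (m + j)) ->
  (forall k : nat, (2 <= k < m)%N ->
     ~ lin_indep (fun j : 'I_(n.+1 - k) => cent s (k + j))) ->
  exists T U : 'rV[K]_(n.+1 - m),
    map_mx (scal d) U
      + \row_(j < n.+1 - m) ent (sysmx A0 Al) m.-1 (m + j)
      - map_mx (scal d) T
          *m \matrix_(i < n.+1 - m, j < n.+1 - m) ent (sysmx A0 Al) (m + i) (m + j)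
      = 0
    /\ T *m (\col_(i < n.+1 - m) cent v (m + i)) = 0.
Proof.
move=> hn [hu hv hlow hdiag] hAs hs1 hdep /andP[hm2 hmn] hind hmin.
case: m hm2 hmn hind hmin => [|[|q]] // _ hmn hind hmin.
set k := (n.+1 - q.+2)%N in hind hmin *.
have hk : n = (q.+1 + k)%N by rewrite /k; lia.
have k_gt0 : (0 < k)%N by rewrite /k; lia.
clearbody k; subst n.
have hA0d : forall i, A0 i i = 1.
  move=> i; have := congr1 (mcoeff mone) (hdiag i).
  by rewrite sysmxE eps_sysent mcoeff1 eqxx.
have hA0l : forall i j : 'I_(q.+1 + k), (j < i)%N -> A0 i j = 0.
  move=> i j hij; have := congr1 (mcoeff mone) (hlow i j hij).
  by rewrite sysmxE eps_sysent mcoeff0.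
pose rs (j : 'I_k) : 'I_(q.+1 + k) := rshift q.+1 j.
pose r0 : 'I_(q.+1 + k) := lshift k (@ord_max q).
pose f (j : 'I_k) := s (rs j) 0.
pose B0 : 'M[K]_k := \matrix_(i, j) A0 (rs i) (rs j).
pose Bl (l : 'I_d) : 'M[K]_k := \matrix_(i, j) Al l (rs i) (rs j).
pose w : 'cV[K]_k := \col_(i < k) cent v (q.+2 + i).
have hB0 : B0 \in unitmx.
  rewrite unitmxE -det_tr det_trig.
    by rewrite big1 ?unitr1 // => i _; rewrite !mxE hA0d.
  by apply/is_trig_mxP => i j hij; rewrite !mxE hA0l //= ltn_add2l.
have row : forall i : 'I_(q.+1 + k),
    \sum_(j < q.+1) sysmx A0 Al i (lshift k j) * s (lshift k j) 0
    + \sum_(j < k) sysmx A0 Al i (rs j) * f j = scal d (v i 0).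
  move=> i; have := congr1 (fun M : 'cV[freeAlg K d]_(q.+1 + k) => M i 0) hAs; rewrite /= !mxE => <-.
  by rewrite big_split_ord.
have H2 : forall i, \sum_j (scal d (B0 i j) + \sum_l scal d (Bl l i j) * letter K l) * f j
     = scal d (w i 0).
  move=> i. rewrite mxE. rewrite /cent. rewrite (@entE _ _ _ v (rs i) ord0) //.
  rewrite -(row (rs i)).
  rewrite [X in _ = X + _]big1 ?add0r.
    apply: eq_bigr => j _. rewrite sysmxE. rewrite !mxE.     under [X in (_ + X) * _ = _]eq_bigr => l _ do rewrite mxE.
    by [].
  move=> j _; rewrite hlow ?mul0r //=; have := ltn_ord j; lia.
have hrow : s r0 0 + \sum_(j < k) sysmx A0 Al r0 (rs j) * f j = 0.
  have E0 := row r0.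
  rewrite hv /= ?scal0 in E0; last by lia.
  rewrite big_ord_recr /= [X in X + _ + _ = _]big1 ?add0r in E0.
    rewrite -/r0 hdiag mul1r in E0; exact: E0.
  move=> j _; rewrite hlow ?mul0r //=; have := ltn_ord j; lia.
have hnd : ~ lin_indep (fun j : 'I_k.+1 => cent s (q.+1 + j)).
  case: (posnP q) => [q0|qpos].
    move=> hl; apply: hdep.
    have e : k.+1 = (q.+1 + k)%N by rewrite q0.
    have := @lin_indep_cast _ _ _ _ e (fun x : nat => cent s (q.+1 + x)) hl.
    apply: lin_indep_ext => j; apply: entE => //; case: j => x hx; by rewrite /= q0.
  move=> hl; apply: (hmin q.+1); first by apply/andP; split => //.
  have e : k.+1 = ((q.+1 + k).+1 - q.+1)%N by lia.
  exact: (@lin_indep_cast _ _ _ _ e (fun x : nat => cent s (q.+1 + x)) hl).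
have [c [hc hnz]] : exists c : 'I_k.+1 -> K,
    \sum_j c j *: cent s (q.+1 + j) = 0 /\ exists j, c j != 0.
  apply: NNPP => H; apply: hnd => c hc j; apply: NNPP => hcj; apply: H.
  by exists c; split => //; exists j; apply/eqP.
have hf : forall i : 'I_k, cent s (q.+1 + lift ord0 i) = f i.
  by move=> i; apply: entE => //=; rewrite /bump leq0n /= addnS.
have hs0 : cent s (q.+1 + (@ord0 k)) = s r0 0.
  by apply: entE => //=; rewrite addn0.
have {}hc : c ord0 *: s r0 0 + \sum_(i < k) c (lift ord0 i) *: f i = 0.
  apply: etrans hc; rewrite [RHS]big_ord_recl hs0.
  under [X in _ = _ + X]eq_bigr => i _ do rewrite hf.
  by [].
have hindf : lin_indep f.
  by apply: lin_indep_ext hind => j; apply: entE.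
have hc0 : c ord0 != 0.
  apply/negP => /eqP c0; case: hnz => j; apply/negP; rewrite negbK.
  have hz : forall i, c (lift ord0 i) = 0.
    by apply: hindf; move: hc; rewrite c0 scale0r add0r.
  by case: (unliftP ord0 j) => [j'|] ->; rewrite ?hz ?c0.
pose mu (j : 'I_k) := - ((c ord0)^-1 * c (lift ord0 j)).
have hmu : s r0 0 = \sum_j mu j *: f j.
  have -> : s r0 0 = (c ord0)^-1 *: (c ord0 *: s r0 0) by rewrite scalerA mulVf // scale1r.
  move/eqP: hc; rewrite addr_eq0 => /eqP ->.
  rewrite scalerN scaler_sumr -sumrN; apply: eq_bigr => j _.
  by rewrite scalerA /mu scaleNr.
pose g : 'rV[K]_k := \row_j (mu j + A0 r0 (rs j)).
pose al (l : 'I_d) : 'rV[K]_k := \row_j Al l r0 (rs j).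
have H1 : \sum_j (scal d (g 0 j) + \sum_l scal d (al l 0 j) * letter K l) * f j = 0.
  apply: etrans hrow; rewrite hmu -big_split /=; apply: eq_bigr => j _.
  under [X in (_ + X) * _ = _]eq_bigr => l _ do rewrite mxE.
  rewrite mxE sysmxE /scal rmorphD /= -addrA mulrDl mul_malgC.
  by [].
have [hTl hTw] := @core _ _ _ f B0 Bl g al w hindf hB0 H1 H2.
exists (g *m invmx B0), (\row_j mu j); split; last exact: hTw.
set T := g *m invmx B0.
have hTB : forall j, \sum_i T 0 i * A0 (rs i) (rs j) = mu j + A0 r0 (rs j).
  move=> j; have := congr1 (fun M : 'rV[K]_k => M 0 j) (mulmxKV hB0 g).
  rewrite /= !mxE => <-; apply: eq_bigr => i _; by rewrite !mxE.
have hTl' : forall l j, \sum_i T 0 i * Al l (rs i) (rs j) = Al l r0 (rs j).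
  move=> l j; have := congr1 (fun M : 'rV[K]_k => M 0 j) (hTl l).
  rewrite /= !mxE => <-; apply: eq_bigr => i _; by rewrite !mxE.
clearbody T.
apply/rowP => j; rewrite !mxE.
rewrite (@entE _ _ _ (sysmx A0 Al) r0 (rs j)) //.
under eq_bigr => i _ do rewrite !mxE (@entE _ _ _ (sysmx A0 Al) (rs i) (rs j)) // sysmxE.
rewrite (@combE _ _ _ (fun i => T 0 i) (fun i => A0 (rs i) (rs j)) (fun l i => Al l (rs i) (rs j))).
rewrite hTB. under eq_bigr => l _ do rewrite hTl'.
by rewrite sysmxE /scal rmorphD /= addrA subrr.
Qed.
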